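(* Let $w:\{0,1\}^L\to\mathbb{R}_{\ge 0}$ be a generic fitness landscape that induces the standard staircase triangulation, with genotypes written as subsets of $\{1,\dots,L\}$. Then: (i) if a single mutant $\{i\}$ is a peak, then every other peak contains $i$; in particular, two distinct single mutants cannot both be peaks; (ii) for distinct $i,j,k$, the double mutants $\{i,j\}$ and $\{j,k\}$ cannot both be peaks; (iii) for distinct $i,j,k,l$, the triple mutant $\{i,j,k\}$ and the double mutant $\{k,l\}$ cannot both be peaks.
   Context: A genotype $g\in\{0,1\}^L$ is identified with the set $\{i: g_i=1\}\subseteq\{1,\dots,L\}$ and with a vertex of $[0,1]^L$. The triangulation induced by $w$ is the regular subdivision of $[0,1]^L$ obtained by projecting the upper faces of $\mathrm{conv}\{(g,w_g)\}\subset\mathbb{R}^{L+1}$; $w$ is generic if all $w_g$ are distinct and this subdivision is a triangulation. A peak is a genotype all of whose Hamming neighbours (sets differing in exactly one element) have strictly lower fitness. The standard staircase triangulation consists of the $L!$ simplices $\{g_0\subset g_1\subset\dots\subset g_L\}$ with $g_0=\emptyset$, $g_L=\{1,\dots,L\}$ and $|g_k|=k$. *)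

(* Defs.v *)
From HB Require Import structures.
From mathcomp Require Import all_boot all_order all_algebra.
Set Implicit Arguments. Unset Strict Implicit. Unset Printing Implicit Defensive.
Import Order.TTheory GRing.Theory Num.Theory.
Local Open Scope ring_scope.

(* Genotypes of length L: subsets of 'I_L (locus i in 'I_L is locus i+1 of the paper);
   a genotype g is the 0/1 vertex of [0,1]^L with coordinates 1 exactly on g. *)

Definition aff_at (R : realFieldType) (L : nat) (a : 'I_L -> R) (b : R)
  (g : {set 'I_L}) : R := b + \sum_(i in g) a i.

(* S is (the vertex set of) a cell of the regular subdivision induced by w:
   the projection of an upper face of conv{(g, w g)}, i.e. there is a
   non-vertical hyperplane y = b + a.x lying weakly above all lifted points
   and touching exactly the lifted points of S. *)
Definition is_cell (R : realFieldType) (L : nat) (w : {set 'I_L} -> R)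
  (S : {set {set 'I_L}}) : Prop :=
  exists (a : 'I_L -> R) (b : R),
    (forall g, w g <= aff_at a b g) /\ S = [set g | aff_at a b g == w g].

Definition is_max_cell (R : realFieldType) (L : nat) (w : {set 'I_L} -> R)
  (S : {set {set 'I_L}}) : Prop :=
  is_cell w S /\ (forall T, is_cell w T -> S \subset T -> T = S).

(* Generic: all w g distinct and the subdivision is a triangulation (every
   full-dimensional cell of the L-cube has exactly L+1 vertices, i.e. is a simplex). *)
Definition generic (R : realFieldType) (L : nat) (w : {set 'I_L} -> R) : Prop :=
  injective w /\ (forall S, is_max_cell w S -> #|S| = L.+1).

Definition staircase_simplex (L : nat) (S : {set {set 'I_L}}) : Prop :=
  exists g : 'I_L.+1 -> {set 'I_L},
    (forall k, #|g k| = k :> nat) /\ (forall k l : 'I_L.+1, (k <= l)%N -> g k \subset g l)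
    /\ S = [set g k | k : 'I_L.+1].

Definition induces_staircase (R : realFieldType) (L : nat) (w : {set 'I_L} -> R) : Prop :=
  forall S, is_max_cell w S <-> staircase_simplex S.

Definition flip (L : nat) (g : {set 'I_L}) (i : 'I_L) : {set 'I_L} :=
  if i \in g then g :\ i else i |: g.

Definition is_peak (R : realFieldType) (L : nat) (w : {set 'I_L} -> R)
  (g : {set 'I_L}) : Prop :=
  forall i : 'I_L, w (flip g i) < w g.

(* Main.v *)
Require Import Defs.
From HB Require Import structures.
From mathcomp Require Import all_boot all_order all_algebra.
From mathcomp Require Import ring lra.
Import Order.TTheory GRing.Theory Num.Theory.
Local Open Scope ring_scope.

Lemma square (R : realFieldType) (L : nat) (w : {set 'I_L} -> R) :
  induces_staircase w -> forall (g : {set 'I_L}) (i j : 'I_L),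
  i \notin g -> j \notin g -> i != j ->
  w (i |: g) + w (j |: g) < w g + w (i |: (j |: g)).
Proof.
move=> Hst g i j ig jg ij.
pose s := enum g ++ [:: i; j] ++ enum (~: (i |: (j |: g))).
have us : uniq s.
  rewrite /s; rewrite cat_uniq enum_uniq /= !mem_enum (negbTE ig) (negbTE jg) enum_uniq andbT /=.
  rewrite !inE !mem_enum !inE !eqxx /= orbT andbT (negbTE ij) /= andbT.
  apply/hasPn => x; rewrite mem_enum !inE !negb_or => /andP [_ /andP [_ ]].
  by rewrite mem_enum.
have allin : forall x, x \in s.
  move=> x; rewrite /s !mem_cat !mem_enum !inE.
  by case: (x == i); case: (x == j); case: (x \in g).
have ss : size s = L.
  rewrite -(card_uniqP us) -[RHS](card_ord L).
  by apply: eq_card => x; rewrite allin inE.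
pose G (k : nat) := [set x in take k s].
have cG : forall k, (k <= L)%N -> #|G k| = k.
  move=> k kL; rewrite cardsE (card_uniqP _); last exact: take_uniq.
  by rewrite size_takel // ss.
have mG : forall k l : 'I_L.+1, (k <= l)%N -> G k \subset G l.
  move=> k l kl; apply/subsetP => x; rewrite !inE -(take_takel s kl).
  exact: mem_take.
have gL : (#|g|.+2 <= L)%N.
  have := max_card (i |: (j |: g)); rewrite card_ord !cardsU1 !inE (negbTE ig) (negbTE jg) (negbTE ij) /=.
  by rewrite add1n add1n.
have tk : forall n, (#|g| <= n)%N -> take n s = enum g ++ take (n - #|g|)%N ([:: i; j] ++ enum (~: (i |: (j |: g)))).
  move=> n hn; rewrite /s take_cat -cardE ltnNge hn /=. by [].
have G0 : G #|g| = g.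
  by apply/setP => x; rewrite inE tk // subnn cats0 mem_enum.
have G1 : G #|g|.+1 = i |: g.
  by apply/setP => x; rewrite inE tk // subSnn /= !inE mem_cat mem_enum inE orbC.
have G2 : G #|g|.+2 = i |: (j |: g).
  apply/setP => x.
  rewrite inE (tk _ (leq_trans (leqnSn _) (leqnSn _))). rewrite [(_ - _)%N](_ : _ = 2%N); last by rewrite -addn2 addKn.
  rewrite /= !inE mem_cat mem_enum !inE take0 in_nil orbF.
  by case: (x == i); case: (x == j); case: (x \in g).
pose S := [set G k | k : 'I_L.+1].
have [[a [b [Hle HS]]] _] := (Hst S).2 (ex_intro _ (fun k : 'I_L.+1 => G k)
      (conj (fun k : 'I_L.+1 => cG k (ltn_ord k)) (conj mG erefl))).
have inS : forall k, (k <= L)%N -> aff_at a b (G k) = w (G k).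
  move=> k kL; apply/eqP; have : G k \in S.
    by apply/imsetP; exists (inord k); rewrite // inordK.
  by rewrite HS inE.
have e0 := inS _ (leq_trans (leqnSn _) (ltnW gL)); rewrite G0 in e0.
have e1 := inS _ (ltnW gL); rewrite G1 in e1.
have e2 := inS _ gL; rewrite G2 in e2.
have e3 : w (j |: g) < aff_at a b (j |: g).
  rewrite lt_neqAle Hle andbT; apply/negP => /eqP E.
  have : j |: g \in S by rewrite HS inE E.
  case/imsetP => k _ Ek.
  have ck : nat_of_ord k = #|g|.+1.
    by rewrite -(cG k (ltn_ord k)) -Ek cardsU1 jg.
  rewrite ck G1 in Ek.
  by move: (setU11 j g); rewrite Ek !inE (negbTE jg) orbF eq_sym (negbTE ij).
have aff : aff_at a b (i |: g) + aff_at a b (j |: g) = aff_at a b g + aff_at a b (i |: (j |: g)).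
  have ijg : i \notin j |: g by rewrite !inE negb_or ig andbT.
  rewrite /aff_at !big_setU1 //=; ring.
lra.
Qed.

Lemma incr (R : realFieldType) (L : nat) (w : {set 'I_L} -> R) :
  induces_staircase w -> forall (l : 'I_L) n (h h' : {set 'I_L}),
  #|h' :\: h| = n -> h \subset h' -> l \notin h' ->
  w (l |: h) - w h <= w (l |: h') - w h'.
Proof.
move=> Hst l n; elim: n => [|n IH] h h' Hc hh' lh'.
  have : h' :\: h = set0 by apply/cards0_eq.
  move/eqP; rewrite setD_eq0 => h'h.
  by have -> : h = h' by apply/eqP; rewrite eqEsubset hh'.
have : (0 < #|h' :\: h|)%N by rewrite Hc.
rewrite card_gt0 => /set0Pn [j]; rewrite inE => /andP [jh jh'].
have E : (h' :\ j) :\: h = (h' :\: h) :\ j.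
  by apply/setP => x; rewrite !inE; case: (x == j); case: (x \in h).
have c2 : #|(h' :\ j) :\: h| = n.
  by rewrite E; move: Hc; rewrite (cardsD1 j) !inE jh jh' /= add1n => -[].
have s2 : h \subset h' :\ j.
  apply/subsetP => x xh; rewrite !inE (subsetP hh') // andbT.
  by apply/eqP => xj; rewrite -xj xh in jh.
have lh2 : l \notin h' :\ j by rewrite !inE negb_and lh' orbT.
have := IH _ _ c2 s2 lh2.
have lj : l != j by apply/eqP => lj; rewrite lj jh' in lh'.
have jn : j \notin h' :\ j by rewrite !inE eqxx.
have := @square _ _ w Hst _ _ _ lh2 jn lj.
rewrite setD1K //.
lra.
Qed.

Ltac sets := let x := fresh "x" in apply/setP => x; rewrite !inE;
  by repeat match goal with |- context [?z == ?y] => constr_eq z x; case: (z == y) end.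

Theorem lemma1 (R : realFieldType) (L : nat) (w : {set 'I_L} -> R) :
  (forall g, 0 <= w g) -> generic w -> induces_staircase w ->
  [/\ (forall (i : 'I_L) (g : {set 'I_L}),
         is_peak w [set i] -> is_peak w g -> g != [set i] -> i \in g),
      (forall i j : 'I_L, i != j -> ~ (is_peak w [set i] /\ is_peak w [set j])),
      (forall i j k : 'I_L, i != j -> j != k -> i != k ->
         ~ (is_peak w [set i; j] /\ is_peak w [set j; k])) &
      (forall i j k l : 'I_L, i != j -> i != k -> i != l -> j != k -> j != l -> k != l ->
         ~ (is_peak w [set i; j; k] /\ is_peak w [set k; l]))].
Proof.
move=> _ _ Hst.
have P1 : forall i g, is_peak w [set i] -> is_peak w g -> i \in g.
  move=> i g Pi Pg; apply/negPn/negP => ig.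
  have := @incr _ _ w Hst i _ set0 g erefl (sub0set g) ig.
  have := Pi i; have := Pg i.
  rewrite /flip (negbTE ig) set11 setU0 setDv.
  lra.
split.
- by move=> i g Pi Pg _; apply: P1.
- move=> i j ij [Pi Pj]; have := P1 _ _ Pi Pj; rewrite inE.
  by rewrite (negbTE ij).
- move=> i j k ij jk ik [Pa Pb].
  have ij' : i \notin [set j] by rewrite inE.
  have kj' : k \notin [set j] by rewrite inE eq_sym.
  have := @square _ _ w Hst [set j] i k ij' kj' ik.
  have := Pa i; have := Pb i.
  have f1 : flip [set i; j] i = [set j].
    by rewrite /flip !inE eqxx /= setU1K // inE.
  have f2 : flip [set j; k] i = i |: [set j; k].
    by rewrite /flip !inE (negbTE ij) (negbTE ik).
  have e1 : k |: [set j] = [set j; k] by sets.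
  rewrite f1 f2 e1.
  lra.
- move=> i j k l ij ik il jk jl kl [Pa Pb].
  have sub : [set k] \subset [set i; j; k].
    by apply/subsetP => x; rewrite !inE => ->; rewrite !orbT.
  have ln : l \notin [set i; j; k].
    by rewrite !inE !(eq_sym l) (negbTE il) (negbTE jl) (negbTE kl).
  have := @incr _ _ w Hst l _ _ _ erefl sub ln.
  have := Pa l; have := Pb l.
  have f1 : flip [set k; l] l = [set k].
    rewrite /flip !inE eqxx orbT /=.
    have -> : [set k; l] = [set l; k] by sets.
    by rewrite setU1K // inE eq_sym.
  have f2 : flip [set i; j; k] l = l |: [set i; j; k].
    by rewrite /flip (negbTE ln).
  have e1 : l |: [set k] = [set k; l] by sets.
  rewrite f1 f2 e1.
  lra.
Qed.
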